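(* Let $K$ be a field of characteristic zero and $W_n$ the Witt Lie algebra. Then $\sigma(\mathcal{H}_n)=\mathcal{H}_n$ for every Lie algebra automorphism $\sigma$ of $W_n$.
   Context: $W_n=\mathrm{Der}_K(K[x_1^{\pm1},\ldots,x_n^{\pm1}])$, $\mathcal{H}_n=\bigoplus_{i=1}^nKH_i$ with $H_i=x_i\partial_i$, $\partial_i=\partial/\partial x_i$. *)

(* Defs.v *)
From HB Require Import structures.
From mathcomp Require Import all_boot all_order all_algebra.
Set Implicit Arguments. Unset Strict Implicit. Unset Printing Implicit Defensive.
Import Order.TTheory GRing.Theory Num.Theory.
Local Open Scope ring_scope.

Section Witt.
Variables (K : fieldType) (n : nat) (L : comUnitAlgType K) (x : 'I_n -> L).

Definition lmonom (a : {ffun 'I_n -> int}) : L := \prod_(i < n) (x i) ^ (a i).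

(* (L, x) is the Laurent polynomial algebra K[x_1^{±1},...,x_n^{±1}]:
   the x_i are units and the Laurent monomials form a K-basis of L. *)
Definition is_laurent_algebra : Prop :=
  (forall i, x i \is a GRing.unit) /\
  (forall f : L, exists (s : seq {ffun 'I_n -> int}) (c : {ffun 'I_n -> int} -> K),
      f = \sum_(a <- s) c a *: lmonom a) /\
  (forall (s : seq {ffun 'I_n -> int}) (c : {ffun 'I_n -> int} -> K),
      uniq s -> \sum_(a <- s) c a *: lmonom a = 0 -> forall a, a \in s -> c a = 0).

Definition is_derivation (D : L -> L) : Prop :=
  (forall (k : K) (f g : L), D (k *: f + g) = k *: D f + D g) /\
  (forall f g : L, D (f * g) = f * D g + D f * g).

Definition Witt := {D : L -> L | is_derivation D}.

(* H_n = span_K {H_i = x_i d_i}: D = sum_i c_i H_i, i.e. the derivation D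
   with D(x_j) = c_j x_j for all j (H_i is the derivation with H_i(x_j) = delta_ij x_j). *)
Definition in_cartan (D : Witt) : Prop :=
  exists c : 'I_n -> K, forall j, proj1_sig D (x j) = c j *: x j.

Definition is_lie_aut (s : Witt -> Witt) : Prop :=
  bijective s /\
  (forall (k : K) (D E F : Witt),
      (forall f, proj1_sig F f = k *: proj1_sig D f + proj1_sig E f) ->
      forall f, proj1_sig (s F) f = k *: proj1_sig (s D) f + proj1_sig (s E) f) /\
  (forall D E F : Witt,
      (forall f, proj1_sig F f =
                 proj1_sig D (proj1_sig E f) - proj1_sig E (proj1_sig D f)) ->
      forall f, proj1_sig (s F) f =
                proj1_sig (s D) (proj1_sig (s E) f) - proj1_sig (s E) (proj1_sig (s D) f)).

End Witt.

(* Main.v *)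
Set Warnings "-all".
Require Import Defs.
From HB Require Import structures.
From mathcomp Require Import all_boot all_order all_algebra.
From mathcomp Require Import ring.
From Stdlib Require Import Classical ClassicalEpsilon ProofIrrelevance FunctionalExtensionality.
Set Implicit Arguments. Unset Strict Implicit. Unset Printing Implicit Defensive.
Import Order.TTheory GRing.Theory Num.Theory.
Local Open Scope ring_scope.

Lemma sum_single (R : zmodType) (I : eqType) (s : seq I) (F : I -> R) c :
  uniq s -> (forall e, e != c -> F e = 0) -> (c \notin s -> F c = 0) ->
  \sum_(e <- s) F e = F c.
Proof.
move=> us H1 H2; case: (boolP (c \in s)) => cs.
  rewrite (bigD1_seq c) //= big1 ?addr0 // => i /H1 //.
rewrite H2 // big1_seq // => i /= Hi; apply: H1.
by apply/eqP=> E; move: Hi cs; rewrite E => ->.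
Qed.

Section Laurent.
Variables (K : fieldType) (n : nat) (L : comUnitAlgType K) (x : 'I_n -> L).
Hypothesis Hl : is_laurent_algebra x.
Local Notation Exp := {ffun 'I_n -> int}.
Local Notation lm := (lmonom x).

Lemma xunit i : x i \is a GRing.unit.
Proof. by case: Hl. Qed.

Lemma lmD a b : lm (a + b) = lm a * lm b.
Proof.
rewrite /lmonom -big_split /=; apply: eq_bigr => i _.
by rewrite ffunE exprzDr // xunit.
Qed.

Lemma lm0 : lm 0 = 1.
Proof. by rewrite /lmonom big1 // => i _; rewrite ffunE expr0z. Qed.

Lemma span_pairs f : exists r : seq (Exp * K), f = \sum_(p <- r) p.2 *: lm p.1.
Proof.
case: Hl => _ [Hs _]; case: (Hs f) => s [c ->].
by exists [seq (a, c a) | a <- s]; rewrite big_map.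
Qed.

Definition rep f : seq (Exp * K) :=
  proj1_sig (constructive_indefinite_description _ (span_pairs f)).

Lemma repE f : f = \sum_(p <- rep f) p.2 *: lm p.1.
Proof. exact: (proj2_sig (constructive_indefinite_description _ (span_pairs f))). Qed.

Definition coef (a : Exp) (f : L) : K := \sum_(p <- rep f) (p.1 == a)%:R * p.2.

Lemma exch (t : seq Exp) (r : seq (Exp * K)) : uniq t -> {subset map fst r <= t} ->
  \sum_(a <- t) (\sum_(p <- r) (p.1 == a)%:R * p.2) *: lm a =
  \sum_(p <- r) p.2 *: lm p.1.
Proof.
move=> ut sub.
under eq_bigr do rewrite scaler_suml.
rewrite exchange_big /=; apply: eq_big_seq => p pr.
rewrite (@sum_single _ _ t (fun a => ((p.1 == a)%:R * p.2) *: lm a) p.1) //=.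
- by rewrite eqxx mul1r.
- by move=> e; rewrite eq_sym => /negbTE ->; rewrite mul0r scale0r.
- by rewrite sub // map_f.
Qed.

Lemma coefU r f : f = \sum_(p <- r) p.2 *: lm p.1 ->
  forall a, coef a f = \sum_(p <- r) (p.1 == a)%:R * p.2.
Proof.
move=> Hf a.
set t := undup (map fst (rep f ++ r)).
have ut : uniq t by rewrite undup_uniq.
have s1 : {subset map fst (rep f) <= t}.
  by move=> e He; rewrite mem_undup map_cat mem_cat He.
have s2 : {subset map fst r <= t}.
  by move=> e He; rewrite mem_undup map_cat mem_cat He orbT.
pose d e := coef e f - \sum_(p <- r) (p.1 == e)%:R * p.2.
have H0 : \sum_(e <- t) d e *: lm e = 0.
  under eq_bigr do rewrite scalerBl.
  rewrite sumrB exch // exch // -repE -Hf subrr //.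
case: Hl => _ [_ Hi].
case: (boolP (a \in t)) => aT.
  by apply/eqP; rewrite -subr_eq0; apply/eqP; apply: (Hi t d ut H0 a aT).
have Z q : q \in map fst (rep f) ++ map fst r -> q != a.
  by move=> Hq; apply/eqP => E; move: aT; rewrite mem_undup map_cat -E Hq.
rewrite /coef big1_seq; last first.
  by move=> p /= Hp; rewrite (negbTE (Z p.1 _)) ?mul0r // mem_cat map_f.
rewrite big1_seq ?subrr // => p /= Hp; rewrite (negbTE (Z p.1 _)) ?mul0r //.
by rewrite mem_cat; apply/orP; right; apply: map_f.
Qed.


Lemma coef_lm a c : coef a (lm c) = (c == a)%:R.
Proof.
rewrite (@coefU [:: (c, 1)] (lm c)); first by rewrite big_cons big_nil addr0 mulr1.
by rewrite big_cons big_nil addr0 scale1r.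
Qed.

Lemma coefD a f g : coef a (f + g) = coef a f + coef a g.
Proof.
by rewrite (@coefU (rep f ++ rep g) (f + g)) ?big_cat // -!repE.
Qed.

Lemma coefZ a k f : coef a (k *: f) = k * coef a f.
Proof.
rewrite (@coefU [seq (p.1, k * p.2) | p <- rep f] (k *: f)) ?big_map /=.
  by rewrite /coef mulr_sumr; apply: eq_bigr => p _; rewrite mulrCA.
rewrite {1}(repE f) scaler_sumr; apply: eq_bigr => p _; by rewrite scalerA.
Qed.

Lemma coef0 a : coef a 0 = 0.
Proof. by rewrite -(scale0r 0) coefZ mul0r. Qed.

Lemma coefN a f : coef a (- f) = - coef a f.
Proof. by rewrite -scaleN1r coefZ mulN1r. Qed.

Lemma coefB a f g : coef a (f - g) = coef a f - coef a g.
Proof. by rewrite coefD coefN. Qed.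

Lemma coef_sum (I : Type) a (r : seq I) (F : I -> L) :
  coef a (\sum_(i <- r) F i) = \sum_(i <- r) coef a (F i).
Proof.
elim: r => [|i r IH]; first by rewrite !big_nil coef0.
by rewrite !big_cons coefD IH.
Qed.

Definition supp f : seq Exp := undup (map fst (rep f)).

Lemma supp_uniq f : uniq (supp f).
Proof. exact: undup_uniq. Qed.

Lemma expand f : f = \sum_(a <- supp f) coef a f *: lm a.
Proof. by rewrite /coef exch ?supp_uniq -?repE // => e; rewrite mem_undup. Qed.

Lemma coef_supp a f : coef a f != 0 -> a \in supp f.
Proof.
apply: contraR => Ha; rewrite /coef big1_seq // => p /= Hp.
have -> : (p.1 == a) = false.
  by apply/negbTE/eqP => E; move: Ha; rewrite mem_undup -E map_f.
by rewrite mul0r.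
Qed.

Lemma coef_eq0 f : (forall a, coef a f = 0) -> f = 0.
Proof.
move=> H; rewrite (expand f) big1 // => a _; by rewrite H scale0r.
Qed.

Lemma coef_mul d f h : coef d (f * h) =
  \sum_(e <- supp f) \sum_(e' <- supp h) coef e f * coef e' h * (e + e' == d)%:R.
Proof.
rewrite {1}(expand f) {1}(expand h) mulr_suml coef_sum; apply: eq_bigr => e _.
rewrite mulr_sumr coef_sum; apply: eq_bigr => e' _.
by rewrite -scalerAl -scalerAr scalerA -lmD coefZ coef_lm.
Qed.

Lemma sum_nz (I : eqType) (r : seq I) (F : I -> K) :
  \sum_(i <- r) F i != 0 -> exists2 i, i \in r & F i != 0.
Proof.
elim: r => [|i r IH]; first by rewrite big_nil eqxx.
rewrite big_cons; case: (boolP (F i == 0)) => Hi.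
  rewrite (eqP Hi) add0r => /IH [j Hj Fj]; by exists j; rewrite ?inE ?Hj ?orbT.
by move=> _; exists i; rewrite ?inE ?eqxx.
Qed.

Section Order.
Variable lt : rel Exp.
Hypothesis ltxx : forall a, lt a a = false.
Hypothesis lt_trans : forall a b c, lt a b -> lt b c -> lt a c.
Hypothesis lt_total : forall a b, a != b -> lt a b || lt b a.
Hypothesis ltD : forall a b c, lt a b -> lt (a + c) (b + c).

Definition le a b := (a == b) || lt a b.

Lemma lt_neq a b : lt a b -> a != b.
Proof. by apply: contraTneq => ->; rewrite ltxx. Qed.

Lemma le_lt_trans a b c : le a b -> lt b c -> lt a c.
Proof. by case/orP => [/eqP -> //|]; apply: lt_trans. Qed.

Lemma lt_le_trans a b c : lt a b -> le b c -> lt a c.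
Proof. by move=> H; case/orP => [/eqP <- //|]; apply: lt_trans. Qed.

Lemma le_trans a b c : le a b -> le b c -> le a c.
Proof.
case/orP => [/eqP -> //|H1] H2; by rewrite /le (lt_le_trans H1 H2) orbT.
Qed.

Lemma le_lt_asym a b : le a b -> lt b a -> False.
Proof. by move=> H1 H2; move: (le_lt_trans H1 H2); rewrite ltxx. Qed.

Lemma ltDl a b c : lt a b -> lt (c + a) (c + b).
Proof. by rewrite ![c + _]addrC; apply: ltD. Qed.

Lemma leD a b c d : le a b -> le c d -> le (a + c) (b + d).
Proof.
move=> H1 H2; apply: (@le_trans _ (b + c)).
  by case/orP: H1 => [/eqP -> |H]; rewrite /le ?eqxx // ltD ?orbT.
by case/orP: H2 => [/eqP -> |H]; rewrite /le ?eqxx // ltDl ?orbT.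
Qed.

Lemma ltD_le a b c d : lt a b -> le c d -> lt (a + c) (b + d).
Proof.
move=> H1 H2; apply: (@lt_le_trans _ (b + c)); first exact: ltD.
by case/orP: H2 => [/eqP -> |H]; rewrite /le ?eqxx // ltDl ?orbT.
Qed.

Lemma max_list (s : seq Exp) : s != [::] -> exists2 b, b \in s & forall a, a \in s -> le a b.
Proof.
elim: s => [//|a s IH] _.
case: (altP (s =P [::])) => [->|/IH [b Hb Hm]].
  by exists a => [|e]; rewrite ?inE // => /eqP ->; rewrite /le eqxx.
case: (altP (a =P b)) => [->|ab].
  by exists b => [|e]; rewrite ?inE ?eqxx // => /orP [/eqP ->|/Hm]; rewrite /le ?eqxx.
case/orP: (lt_total ab) => H.
  exists b => [|e]; rewrite ?inE ?Hb ?orbT // => /orP [/eqP ->|/Hm //].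
  by rewrite /le H orbT.
exists a => [|e]; rewrite ?inE ?eqxx // => /orP [/eqP ->|/Hm He]; first by rewrite /le eqxx.
by rewrite /le (le_lt_trans He H) orbT.
Qed.

Lemma LT f h c c' :
  (forall e, coef e f != 0 -> le e c) -> (forall e, coef e h != 0 -> le e c') ->
  (forall d, coef d (f * h) != 0 -> le d (c + c')) /\
  coef (c + c') (f * h) = coef c f * coef c' h.
Proof.
move=> Hf Hh; split.
  move=> d; rewrite coef_mul => /sum_nz [e _] /sum_nz [e' _].
  case: (boolP (coef e f == 0)) => [/eqP ->|fe]; first by rewrite !mul0r eqxx.
  case: (boolP (coef e' h == 0)) => [/eqP ->|he]; first by rewrite mulr0 mul0r eqxx.
  case: (altP (e + e' =P d)) => [<- _|_]; last by rewrite mulr0 eqxx.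
  by apply: leD; [apply: Hf | apply: Hh].
rewrite coef_mul (@sum_single _ _ _ _ c) ?supp_uniq //.
- rewrite (@sum_single _ _ _ _ c') ?supp_uniq ?eqxx ?mulr1 //.
    move=> e' ne; case: (boolP (coef e' h == 0)) => [/eqP ->|he]; first by rewrite mulr0 mul0r.
    have H : lt e' c' by case/orP: (Hh _ he) => [/eqP E|//]; move: ne; rewrite E eqxx.
    by rewrite (negbTE (lt_neq (ltDl c H))) mulr0.
  move=> cs; have -> : coef c' h = 0 by apply/eqP; apply: contraR cs; apply: coef_supp.
  by rewrite mulr0 ?mul0r.
- move=> e ne; rewrite big1 // => e' _.
  case: (boolP (coef e f == 0)) => [/eqP ->|fe]; first by rewrite !mul0r.
  case: (boolP (coef e' h == 0)) => [/eqP ->|he]; first by rewrite mulr0 mul0r.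
  have H : lt e c by case/orP: (Hf _ fe) => [/eqP E|//]; move: ne; rewrite E eqxx.
  by rewrite (negbTE (lt_neq (ltD_le H (Hh _ he)))) mulr0.
- move=> cs; have -> : coef c f = 0 by apply/eqP; apply: contraR cs; apply: coef_supp.
  by rewrite big1 // => e' _; rewrite !mul0r.
Qed.


Section Der.
Variable D : L -> L.
Hypothesis HD : is_derivation D.

Lemma derD f g : D (f + g) = D f + D g.
Proof. by case: HD => H _; have := H 1 f g; rewrite !scale1r. Qed.

Lemma der0 : D 0 = 0.
Proof. have H := derD 0 0; rewrite addr0 in H; by apply: (addrI (D 0)); rewrite addr0 -H. Qed.

Lemma derZ k f : D (k *: f) = k *: D f.
Proof. by case: HD => H _; rewrite -[k *: f]addr0 H der0 addr0. Qed.

Lemma derN f : D (- f) = - D f.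
Proof. by rewrite -scaleN1r derZ scaleN1r. Qed.

Lemma derB f g : D (f - g) = D f - D g.
Proof. by rewrite derD derN. Qed.

Lemma derM f g : D (f * g) = f * D g + D f * g.
Proof. by case: HD. Qed.

Lemma der_sum (I : Type) (r : seq I) (F : I -> L) :
  D (\sum_(i <- r) F i) = \sum_(i <- r) D (F i).
Proof.
elim: r => [|i r IH]; first by rewrite !big_nil der0.
by rewrite !big_cons derD IH.
Qed.

Lemma der1 : D 1 = 0.
Proof.
have H := derM 1 1; rewrite !mul1r mulr1 in H.
by apply: (addrI (D 1)); rewrite addr0 -H.
Qed.

Lemma derV u : u \is a GRing.unit -> D (u^-1) = - (u^-1 * (u^-1 * D u)).
Proof.
move=> Hu; have := derM u u^-1; rewrite mulrV // der1 => /eqP.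
rewrite eq_sym addr_eq0 => /eqP E.
rewrite -[D u^-1]mul1r -(mulVr Hu) -mulrA E mulrN; congr (- _).
by rewrite (mulrC (D u)) mulrCA.
Qed.

Lemma derXn u m : u \is a GRing.unit -> D (u ^+ m) = u ^+ m * (m%:R * (u^-1 * D u)).
Proof.
move=> Hu; elim: m => [|m IH]; first by rewrite expr0 der1 mul0r mulr0.
have E : u * (u ^+ m) * (u^-1 * D u) = D u * u ^+ m.
  by rewrite (mulrC u) -mulrA (mulrA u) mulrV // mul1r mulrC.
by rewrite exprS derM IH mulrS mulrDl mul1r mulrDr E !mulrA addrC.
Qed.

Lemma derXz u z : u \is a GRing.unit -> D (u ^ z) = u ^ z * (z%:~R * (u^-1 * D u)).
Proof.
move=> Hu; case: z => m; first by rewrite derXn.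
rewrite /exprz derV ?unitrX // derXn // NegzE.
rewrite (mulrA (u ^- m.+1) (u ^+ m.+1)) mulVr ?unitrX // mul1r -mulrN.
by congr (_ * _); rewrite -mulNr; congr (_ * _); rewrite intrN.
Qed.

Lemma der_prod (I : Type) (r : seq I) (F : I -> L) (G : I -> L) :
  (forall i, D (F i) = F i * G i) ->
  D (\prod_(i <- r) F i) = \prod_(i <- r) F i * \sum_(i <- r) G i.
Proof.
move=> H; elim: r => [|i r IH]; first by rewrite !big_nil der1 mulr0.
rewrite !big_cons derM IH H mulrDr addrC !mulrA; congr (_ + _).
by rewrite -mulrA (mulrC (G i)) mulrA.
Qed.

Definition uu j := (x j)^-1 * D (x j).

Lemma der_lm a : D (lm a) = lm a * \sum_(j < n) (a j)%:~R * uu j.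
Proof. by apply: der_prod => i; rewrite derXz ?xunit. Qed.

End Der.

Lemma der_zero G : is_derivation G -> (forall j, G (x j) = 0) -> forall f, G f = 0.
Proof.
move=> HG H0 f; rewrite (expand f) der_sum // big1 // => a _.
rewrite derZ // der_lm // big1 ?mulr0 ?scaler0 // => j _.
by rewrite /uu H0 !mulr0.
Qed.

Definition Hop j g := \sum_(e <- supp g) (coef e g * (e j)%:~R) *: lm e.

Lemma coef_H j d g : coef d (Hop j g) = coef d g * (d j)%:~R.
Proof.
rewrite coef_sum (@sum_single _ _ _ _ d) ?supp_uniq //.
- by rewrite coefZ coef_lm eqxx mulr1.
- by move=> e ne; rewrite coefZ coef_lm (negbTE ne) mulr0.
- move=> ds; have -> : coef d g = 0 by apply/eqP; apply: contraR ds; apply: coef_supp.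
  by rewrite !mul0r scale0r coef0.
Qed.

Lemma der_dec D : is_derivation D -> forall g, D g = \sum_(j < n) Hop j g * uu D j.
Proof.
move=> HD g; rewrite {1}(expand g) der_sum //.
under [RHS]eq_bigr do rewrite mulr_suml.
rewrite exchange_big /=; apply: eq_bigr => e _.
rewrite derZ // der_lm // mulr_sumr scaler_sumr; apply: eq_bigr => j _.
rewrite -scalerAl -scalerA scaler_int -mulrzl; congr (_ *: _).
by rewrite mulr1 mulrzl mulrzAr.
Qed.

Lemma top_exists (f : L) : f != 0 -> exists c, coef c f != 0 /\ forall e, coef e f != 0 -> le e c.
Proof.
move=> fn.
have : [seq e <- supp f | coef e f != 0] != [::].
  apply: contraNneq fn => E; apply/eqP; apply: coef_eq0 => a.
  apply/eqP; apply: contraT => Ha.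
  have : a \in [seq e <- supp f | coef e f != 0] by rewrite mem_filter Ha coef_supp.
  by rewrite E.
case/max_list => c; rewrite mem_filter => /andP [Hc _] Hm.
exists c; split => // e He; apply: Hm; by rewrite mem_filter He coef_supp.
Qed.

Lemma domain (f h : L) : f != 0 -> h != 0 -> f * h != 0.
Proof.
move=> /top_exists [c [Hc Hmc]] /top_exists [c' [Hc' Hmc']].
have [_ E] := LT Hmc Hmc'.
apply: contraNneq (mulf_neq0 Hc Hc') => Z; by rewrite -E Z coef0.
Qed.

Section Main.
Variable D : L -> L.
Hypothesis HD : is_derivation D.
Hypothesis char0 : [pchar K] =i pred0.
Hypothesis LF : forall f, exists2 p : {poly K}, p != 0 &
  \sum_(k < size p) p`_k *: iter k D f = 0.

Definition V b (c : Exp) : K := \sum_(j < n) ((c j)%:~R : K) * coef b (uu D j).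

Lemma VD b c c' : V b (c + c') = V b c + V b c'.
Proof. by rewrite /V -big_split; apply: eq_bigr => j _; rewrite ffunE intrD mulrDl. Qed.

Lemma V0 b : V b 0 = 0.
Proof. by rewrite /V big1 // => j _; rewrite ffunE mul0r. Qed.

Lemma VMn b c i : V b (c *+ i) = V b c *+ i.
Proof. elim: i => [|i IH]; by rewrite ?mulr0n ?V0 // !mulrS VD IH. Qed.

Lemma VN b c : V b (- c) = - V b c.
Proof. by apply/eqP; rewrite -addr_eq0 -VD addNr V0. Qed.

Lemma step b g c : (forall j e, coef e (uu D j) != 0 -> le e b) ->
  (forall e, coef e g != 0 -> le e c) ->
  (forall d, coef d (D g) != 0 -> le d (c + b)) /\ coef (c + b) (D g) = coef c g * V b c.
Proof.
move=> Hb Hg.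
have HH j : forall e, coef e (Hop j g) != 0 -> le e c.
  by move=> e; rewrite coef_H; case: (boolP (coef e g == 0)) => [/eqP ->|/Hg //]; rewrite mul0r eqxx.
rewrite (der_dec HD g); split.
  move=> d; rewrite coef_sum => /sum_nz [j _].
  by apply: (LT (HH j) (Hb j)).1.
rewrite coef_sum /V mulr_sumr; apply: eq_bigr => j _.
by rewrite (LT (HH j) (Hb j)).2 coef_H mulrA.
Qed.

Lemma iter_top b a k : (forall j e, coef e (uu D j) != 0 -> le e b) ->
  (forall e, coef e (iter k D (lm a)) != 0 -> le e (a + b *+ k)) /\
  coef (a + b *+ k) (iter k D (lm a)) = \prod_(i < k) V b (a + b *+ i).
Proof.
move=> Hb; elim: k => [|k [IH1 IH2]].
  rewrite /= mulr0n addr0 big_ord0 coef_lm eqxx; split => // e.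
  rewrite coef_lm; case: (altP (a =P e)) => [->|ne]; first by rewrite /le eqxx.
  by rewrite eqxx.
have [S1 S2] := step Hb IH1.
have E : a + b *+ k + b = a + b *+ k.+1 by rewrite mulrSr addrA.
rewrite -E /=; split => //.
by rewrite S2 IH2 big_ord_recr.
Qed.

Lemma lt0_mul b m : lt 0 b -> (0 < m)%N -> lt 0 (b *+ m).
Proof.
move=> Hb; elim: m => [//|m IH] _; rewrite mulrSr.
case: m IH => [_|m IH]; first by rewrite mulr0n add0r.
apply: lt_trans (IH isT) _.
by have := ltDl (b *+ m.+1) Hb; rewrite addr0.
Qed.

Lemma lt_iter b a k N : lt 0 b -> (k < N)%N -> lt (a + b *+ k) (a + b *+ N).
Proof.
move=> Hb kN; rewrite -(subnKC (ltnW kN)) mulrnDr addrA.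
have := ltDl (a + b *+ k) (lt0_mul Hb (_ : 0 < N - k)%N); rewrite addr0; apply.
by rewrite subn_gt0.
Qed.

Lemma root_exists b a : lt 0 b -> (forall j e, coef e (uu D j) != 0 -> le e b) ->
  exists i : nat, V b a + V b b *+ i = 0.
Proof.
move=> b0 Hb; case: (LF (lm a)) => p pn Hp.
have sp : size p = (size p).-1.+1 by rewrite prednK // size_poly_gt0.
set N := (size p).-1 in sp.
have NS : (N < size p)%N by rewrite [X in (_ < X)%N]sp ltnSn.
have [T1 T2] := iter_top a N Hb.
have := congr1 (coef (a + b *+ N)) Hp; rewrite coef0 coef_sum.
rewrite (@sum_single _ _ _ _ (Ordinal NS)) /=.
- rewrite coefZ T2 => /eqP; rewrite mulf_eq0.
  have -> : (p`_N == 0) = false by apply/negbTE; rewrite -lead_coef_eq0 in pn.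
  rewrite /= prodf_seq_eq0 => /hasP [i _ /= /eqP Hi].
  by exists i; rewrite -VMn -VD.
- exact: index_enum_uniq.
- move=> k kN; rewrite coefZ.
  case: (boolP (coef (a + b *+ N) (iter k D (lm a)) == 0)) => [/eqP ->|nz]; first by rewrite mulr0.
  have kN' : (k < N)%N.
    have := ltn_ord k; rewrite [X in (_ < X)%N -> _]sp ltnS leq_eqVlt => /orP [/eqP E|//].
    by move: kN; apply: contraNeq => _; apply/eqP/val_inj.
  have Hle := (iter_top a k Hb).1 _ nz.
  by case: (le_lt_asym Hle (lt_iter a b0 kN')).
- by rewrite mem_index_enum.
Qed.

Lemma no_pos j0 a0 : coef a0 (uu D j0) != 0 -> ~~ lt 0 a0.
Proof.
move=> H0; apply/negP => pos.
set SU := [seq e <- flatten [seq supp (uu D j) | j <- enum 'I_n] | [exists j, coef e (uu D j) != 0]].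
have memSU e j : coef e (uu D j) != 0 -> e \in SU.
  move=> He; rewrite mem_filter; apply/andP; split; first by apply/existsP; exists j.
  apply/flattenP; exists (supp (uu D j)); last exact: coef_supp.
  by apply: map_f; rewrite mem_enum.
have : SU != [::] by apply/eqP => E; move: (memSU _ _ H0); rewrite E.
case/max_list => b; rewrite mem_filter => /andP [/existsP [j1 Hj1] _] Hmax.
have Hb j e : coef e (uu D j) != 0 -> le e b by move=> He; apply: Hmax; apply: memSU He.
have b0 : lt 0 b := lt_le_trans pos (Hb _ _ H0).
pose del : Exp := [ffun i => (i == j1)%:Z].
have Vdel : V b del = coef b (uu D j1).
  rewrite /V (bigD1 j1) //= big1 ?addr0 => [|i ni]; first by rewrite ffunE eqxx mul1r.
  by rewrite ffunE (negbTE ni) mul0r.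
case: (root_exists del b0 Hb) => i1; rewrite Vdel => E1.
case: (root_exists (- del) b0 Hb) => i2; rewrite VN Vdel => E2.
set w := coef b (uu D j1) in Hj1 E1 E2 Vdel.
set be := V b b in E1 E2.
have E3 : be *+ (i1 + i2) = 0.
  have : (w + be *+ i1) + (- w + be *+ i2) = 0 by rewrite E1 E2 addr0.
  by rewrite addrACA subrr add0r -mulrnDr.
move: E3; rewrite -mulr_natr => /eqP; rewrite mulf_eq0 => /orP [/eqP be0|].
  by move: E1; rewrite be0 mul0rn addr0 => /eqP; rewrite (negbTE Hj1).
rewrite ((pcharf0P K).1 char0) addn_eq0 => /andP [/eqP i10 _].
by move: E1; rewrite i10 mulr0n addr0 => /eqP; rewrite (negbTE Hj1).
Qed.

End Main.
End Order.

Definition lexlt (a b : Exp) : bool :=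
  [exists i : 'I_n, (a i < b i) && [forall j : 'I_n, (j < i)%N ==> (a j == b j)]].

Lemma lexxx a : lexlt a a = false.
Proof. by apply/negbTE/existsP => [[i /andP [H _]]]; rewrite ltxx in H. Qed.

Lemma lex_trans a b c : lexlt a b -> lexlt b c -> lexlt a c.
Proof.
move=> /existsP [i /andP [Hi /forallP Ei]] /existsP [k /andP [Hk /forallP Ek]].
apply/existsP; case: (ltngtP i k) => ik.
- exists i; apply/andP; split.
    by move/implyP: (Ek i) => /(_ ik) /eqP <-.
  apply/forallP => j; apply/implyP => ji.
  move/implyP: (Ei j) => /(_ ji) /eqP ->.
  by move/implyP: (Ek j) => /(_ (ltn_trans ji ik)).
- exists k; apply/andP; split.
    by move/implyP: (Ei k) => /(_ ik) /eqP ->.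
  apply/forallP => j; apply/implyP => jk.
  move/implyP: (Ei j) => /(_ (ltn_trans jk ik)) /eqP ->.
  by move/implyP: (Ek j) => /(_ jk).
- have E : i = k by apply: val_inj.
  subst k; exists i; apply/andP; split; first exact: lt_trans Hi Hk.
  apply/forallP => j; apply/implyP => ji.
  move/implyP: (Ei j) => /(_ ji) /eqP ->.
  by move/implyP: (Ek j) => /(_ ji).
Qed.

Lemma lex_total a b : a != b -> lexlt a b || lexlt b a.
Proof.
move=> ab.
have [i0 Hi0] : exists i, a i != b i.
  apply/existsP; apply: contraR ab => /existsPn H; apply/eqP/ffunP => i.
  by move: (H i); rewrite negbK => /eqP.
case: (@arg_minnP _ i0 (fun i => a i != b i) (fun i : 'I_n => nat_of_ord i) Hi0) => i Hi Hmin.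
have E (j : 'I_n) : (j < i)%N -> a j == b j.
  move=> ji; apply: contraTT ji => /Hmin; by rewrite leqNgt.
case/orP: (lt_total Hi) => H; [apply/orP; left|apply/orP; right];
  apply/existsP; exists i; rewrite H /=; apply/forallP => j; apply/implyP => /E //.
by rewrite eq_sym.
Qed.

Lemma lexD a b c : lexlt a b -> lexlt (a + c) (b + c).
Proof.
move=> /existsP [i /andP [Hi /forallP Ei]]; apply/existsP; exists i.
rewrite !ffunE ltr_leD ?lexx //=; apply/forallP => j; apply/implyP => ji.
by rewrite !ffunE; move/implyP: (Ei j) => /(_ ji) /eqP ->.
Qed.

Definition lexgt (a b : Exp) := lexlt b a.
Lemma lexgt_xx a : lexgt a a = false. Proof. exact: lexxx. Qed.
Lemma lexgt_trans a b c : lexgt a b -> lexgt b c -> lexgt a c.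
Proof. by move=> h1 h2; apply: lex_trans h2 h1. Qed.
Lemma lexgt_total a b : a != b -> lexgt a b || lexgt b a.
Proof. by move=> /lex_total; rewrite /lexgt orbC. Qed.
Lemma lexgtD a b c : lexgt a b -> lexgt (a + c) (b + c).
Proof. exact: lexD. Qed.

Lemma cartan_of_LF D : is_derivation D -> [pchar K] =i pred0 ->
  (forall f, exists2 p : {poly K}, p != 0 & \sum_(k < size p) p`_k *: iter k D f = 0) ->
  exists c : 'I_n -> K, forall j, D (x j) = c j *: x j.
Proof.
move=> HD ch LF.
have Z j a : coef a (uu D j) != 0 -> a = 0.
  move=> Ha; apply/eqP; apply: contraT => a0.
  have H1 := no_pos lexxx lex_trans lex_total lexD HD ch LF Ha.
  have H2 := no_pos lexgt_xx lexgt_trans lexgt_total lexgtD HD ch LF Ha.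
  by move: (lex_total a0); rewrite /lexgt in H2; rewrite (negbTE H1) (negbTE H2).
exists (fun j => coef 0 (uu D j)) => j.
have Eu : uu D j = coef 0 (uu D j) *: 1.
  rewrite {1}(expand (uu D j)) (@sum_single _ _ _ _ 0) ?supp_uniq ?lm0 //.
  - by move=> e ne; case: (boolP (coef e (uu D j) == 0)) => [/eqP ->|/Z E]; 
      [rewrite scale0r | move: ne; rewrite E eqxx].
  - move=> ns; have -> : coef 0 (uu D j) = 0 by apply/eqP; apply: contraR ns; apply: coef_supp.
    by rewrite scale0r.
have -> : D (x j) = x j * uu D j by rewrite /uu mulrA mulrV ?xunit // mul1r.
by rewrite {1}Eu -scalerAr mulr1.
Qed.

Definition linF (A : L -> L) := forall (k : K) f g, A (k *: f + g) = k *: A f + A g.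

Lemma linF0 A : linF A -> A 0 = 0.
Proof. move=> H; have := H 1 0 0; rewrite !scale1r addr0 => E; by apply: (addrI (A 0)); rewrite addr0 -E. Qed.

Lemma linFZ A k f : linF A -> A (k *: f) = k *: A f.
Proof. by move=> H; rewrite -[k *: f]addr0 H linF0 ?addr0. Qed.

Lemma linF_sum A (I : Type) (r : seq I) (F : I -> L) : linF A ->
  A (\sum_(i <- r) F i) = \sum_(i <- r) A (F i).
Proof.
move=> H; elim: r => [|i r IH]; first by rewrite !big_nil linF0.
by rewrite !big_cons -[F i]scale1r H !scale1r IH.
Qed.

Lemma linF_iter A k : linF A -> linF (iter k A).
Proof.
move=> H; elim: k => [//|k IH] c f g /=.
by rewrite IH H.
Qed.

Lemma der_linF D : is_derivation D -> linF D.
Proof. by case. Qed.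

Lemma is_der_comm D E : is_derivation D -> is_derivation E ->
  is_derivation (fun f : L => D (E f) - E (D f)).
Proof.
move=> HD HE; split.
  move=> k f g; rewrite (derD HE) (derZ HE) (derD HD) (derZ HD).
  rewrite (derD HD) (derZ HD) (derD HE) (derZ HE) scalerBr.
  by rewrite addrACA opprD.
move=> f g; rewrite (derM HE) (derD HD) !(derM HD) (derD HE) !(derM HE).
ring.
Qed.

Lemma is_der_lin (k : K) D E : is_derivation D -> is_derivation E ->
  is_derivation (fun f : L => k *: D f + E f).
Proof.
move=> HD HE; split.
  move=> k' f g; rewrite (derD HE) (derZ HE) (derD HD) (derZ HD).
  by rewrite !scalerDr !scalerA (mulrC k k') addrACA.
move=> f g; by rewrite (derM HE) (derM HD) mulrDr mulrDl scalerDr scalerAr scalerAl addrACA.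
Qed.

Lemma is_der_zero : is_derivation (fun _ : L => 0).
Proof. by split => *; rewrite ?scaler0 ?mulr0 ?mul0r ?addr0. Qed.

Lemma is_der_sum (I : Type) (r : seq I) (c : I -> K) (F : I -> L -> L) :
  (forall i, is_derivation (F i)) -> is_derivation (fun f => \sum_(i <- r) c i *: F i f).
Proof.
move=> H; elim: r => [|i r IH].
  have -> : (fun f : L => \sum_(i <- [::]) c i *: F i f) = (fun _ => 0).
    by apply: functional_extensionality => f; rewrite big_nil.
  exact: is_der_zero.
have -> : (fun f : L => \sum_(j <- i :: r) c j *: F j f) =
          (fun f => c i *: F i f + \sum_(j <- r) c j *: F j f).
  by apply: functional_extensionality => f; rewrite big_cons.
exact: is_der_lin.
Qed.

Lemma is_der_mulL h D : is_derivation D -> is_derivation (fun g : L => h * D g).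
Proof.
move=> HD; split.
  by move=> k f g; rewrite (derD HD) (derZ HD) mulrDr scalerAr.
move=> f g; by rewrite (derM HD) mulrDr (mulrCA h f) (mulrA h).
Qed.

Definition adp (D E : L -> L) k := iter k (fun G f => D (G f) - G (D f)) E.

Lemma is_der_adp D E k : is_derivation D -> is_derivation E -> is_derivation (adp D E k).
Proof.
move=> HD HE; elim: k => [//|k IH] /=; exact: is_der_comm.
Qed.

Lemma LocFin_of_cartan D (c : 'I_n -> K) : is_derivation D -> (forall j, D (x j) = c j *: x j) ->
  forall E, is_derivation E -> exists2 p : {poly K}, p != 0 &
    forall f, \sum_(k < size p) p`_k *: adp D E k f = 0.
Proof.
move=> HD Hc E HE.
pose lam (e : Exp) : K := \sum_(i < n) (e i)%:~R * c i.
have Dlm e : D (lm e) = lam e *: lm e.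
  rewrite der_lm // /lam scaler_suml mulr_sumr; apply: eq_bigr => i _.
  rewrite /uu Hc -scalerAr mulVr ?xunit //.
  by rewrite -scalerA scaler_int mulrzl mulrzAr mulr_algr.
pose zs := flatten [seq [seq lam e - c j | e <- supp (E (x j))] | j <- enum 'I_n].
pose p := \prod_(z <- zs) ('X - z%:P).
exists p; first by apply: monic_neq0; apply: monic_prod_XsubC.
have HG : is_derivation (fun f => \sum_(k < size p) p`_k *: adp D E k f).
  by apply: (@is_der_sum _ _ (fun k : 'I_(size p) => p`_k)) => k; apply: is_der_adp.
apply: der_zero HG _ => j.
pose A g := D g - c j *: g.
have linA : linF A.
  move=> k f g; rewrite /A (derD HD) (derZ HD) scalerBr addrACA -opprD.
  by rewrite scalerDr scalerA mulrC -scalerA.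
have iterA e k : iter k A (lm e) = (lam e - c j) ^+ k *: lm e.
  elim: k => [|k IH]; first by rewrite expr0 scale1r.
  rewrite iterS IH linFZ // /A Dlm -scalerBl scalerA exprSr //.
have adpx k : adp D E k (x j) = iter k A (E (x j)).
  elim: k => [//|k IH]; rewrite iterS -IH /= Hc (derZ (is_der_adp k HD HE)) //.
under eq_bigr do rewrite adpx.
set f := E (x j).
have Hit k : iter k A f = \sum_(e <- supp f) coef e f *: ((lam e - c j) ^+ k *: lm e).
  rewrite {1}(expand f) linF_sum; last exact: linF_iter.
  by apply: eq_bigr => e _; rewrite linFZ ?iterA //; exact: linF_iter.
under eq_bigr do rewrite Hit scaler_sumr.
rewrite exchange_big /= big1_seq // => e /= He.
have -> : \sum_(i < size p) p`_i *: (coef e f *: ((lam e - c j) ^+ i *: lm e)) =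
          (coef e f * p.[lam e - c j]) *: lm e.
  rewrite horner_coef mulr_sumr scaler_suml; apply: eq_bigr => k _.
  by rewrite !scalerA mulrCA.
have -> : p.[lam e - c j] = 0.
  apply/rootP; rewrite root_prod_XsubC; apply/flattenP.
  exists [seq lam e - c j | e <- supp (E (x j))]; first by apply: map_f; rewrite mem_enum.
  by apply: map_f.
by rewrite mulr0 scale0r.
Qed.

End Laurent.

Section Lie.
Variables (K : fieldType) (L : comUnitAlgType K).
Local Notation W := (Witt L).

Definition LocFin (D : L -> L) := forall E, is_derivation E -> exists2 p : {poly K}, p != 0 &
  forall f, \sum_(k < size p) p`_k *: adp D E k f = 0.

Lemma witt_ext (A B : W) : (forall f, proj1_sig A f = proj1_sig B f) -> A = B.
Proof.
case: A B => [a Ha] [b Hb] /= H.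
have E : a = b by apply: functional_extensionality.
subst b; f_equal; apply: proof_irrelevance.
Qed.

Definition wad (D E : W) : W :=
  exist _ (fun f => proj1_sig D (proj1_sig E f) - proj1_sig E (proj1_sig D f))
    (is_der_comm (proj2_sig D) (proj2_sig E)).
Definition wadp (D : W) k (E : W) := iter k (wad D) E.

Lemma wadpE D k E f : proj1_sig (wadp D k E) f = adp (proj1_sig D) (proj1_sig E) k f.
Proof. elim: k f => [//|k IH] f /=; by rewrite !IH. Qed.

Definition wlin (k : K) (A B : W) : W :=
  exist _ (fun f => k *: proj1_sig A f + proj1_sig B f) (is_der_lin k (proj2_sig A) (proj2_sig B)).
Definition wzero : W := exist _ (fun _ => 0) (@is_der_zero K L).
Definition wsum (r : seq (K * W)) : W := foldr (fun kv acc => wlin kv.1 kv.2 acc) wzero r.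

Lemma wsumE r f : proj1_sig (wsum r) f = \sum_(kv <- r) kv.1 *: proj1_sig kv.2 f.
Proof. elim: r => [|kv r IH] /=; by rewrite ?big_nil ?big_cons ?IH. Qed.

Variable s : W -> W.
Hypothesis Hs : is_lie_aut s.

Lemma s_zero f : proj1_sig (s wzero) f = 0.
Proof.
case: Hs => _ [Hlin _].
have H0 : forall h, proj1_sig wzero h = 1 *: proj1_sig wzero h + proj1_sig wzero h.
  by move=> h; rewrite /= scale1r addr0.
have := Hlin 1 wzero wzero wzero H0 f.
rewrite scale1r => E; by apply: (addrI (proj1_sig (s wzero) f)); rewrite addr0 -E.
Qed.

Lemma s_wsum r f : proj1_sig (s (wsum r)) f = \sum_(kv <- r) kv.1 *: proj1_sig (s kv.2) f.
Proof.
elim: r f => [|kv r IH] f /=; first by rewrite big_nil s_zero.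
case: Hs => _ [Hlin _].
by rewrite (Hlin kv.1 kv.2 (wsum r) (wlin kv.1 kv.2 (wsum r)) (fun _ => erefl)) IH big_cons.
Qed.

Lemma s_wadp D k E f : proj1_sig (s (wadp D k E)) f = proj1_sig (wadp (s D) k (s E)) f.
Proof.
elim: k f => [//|k IH] f.
case: Hs => _ [_ Hbr].
rewrite (Hbr D (wadp D k E) (wadp D k.+1 E) (fun _ => erefl)) /=.
by rewrite !IH.
Qed.

Definition wcomb (p : {poly K}) D E :=
  wsum [seq (p`_k, wadp D k E) | k <- index_iota 0 (size p)].

Lemma wcombE p D E f : proj1_sig (wcomb p D E) f =
  \sum_(k < size p) p`_k *: adp (proj1_sig D) (proj1_sig E) k f.
Proof. by rewrite wsumE big_map big_mkord; apply: eq_bigr => k _; rewrite wadpE. Qed.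

Lemma s_wcombE p D E f : proj1_sig (s (wcomb p D E)) f =
  \sum_(k < size p) p`_k *: adp (proj1_sig (s D)) (proj1_sig (s E)) k f.
Proof.
rewrite s_wsum big_map big_mkord; apply: eq_bigr => k _.
by rewrite s_wadp wadpE.
Qed.

Lemma LF_s D : LocFin (proj1_sig D) -> LocFin (proj1_sig (s D)).
Proof.
move=> HD E' HE'.
case: Hs => [[g sg gs] _].
pose Ew : W := exist _ E' HE'.
case: (HD (proj1_sig (g Ew)) (proj2_sig (g Ew))) => p pn Hp.
exists p => // f.
have Z : wcomb p D (g Ew) = wzero by apply: witt_ext => h; rewrite wcombE Hp.
have := s_wcombE p D (g Ew) f; rewrite Z s_zero gs /= => E; exact: (esym E).
Qed.

Lemma LF_s_inv D : LocFin (proj1_sig (s D)) -> LocFin (proj1_sig D).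
Proof.
move=> HD E HE.
case: Hs => [[g sg gs] _].
pose Ew : W := exist _ E HE.
case: (HD (proj1_sig (s Ew)) (proj2_sig (s Ew))) => p pn Hp.
exists p => // f.
have Z : s (wcomb p D Ew) = s wzero.
  by apply: witt_ext => h; rewrite s_wcombE Hp s_zero.
have := wcombE p D Ew f; rewrite (can_inj sg Z) /= => <-; done.
Qed.

End Lie.

Lemma LocFin_iff (K : fieldType) (n : nat) (L : comUnitAlgType K) (x : 'I_n -> L) :
  [pchar K] =i pred0 -> is_laurent_algebra x ->
  forall D : Witt L, in_cartan x D <-> LocFin (proj1_sig D).
Proof.
move=> ch Hl [D HD] /=; split.
  by case=> c Hc E HE; apply: (LocFin_of_cartan Hl HD Hc HE).
move=> LF; rewrite /in_cartan /=.
case: (classic (forall g, D g = 0)) => [H0|].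
  by exists (fun _ => 0) => j; rewrite H0 scale0r.
move/not_all_ex_not => [g0 /eqP Hg0].
apply: (cartan_of_LF Hl HD ch) => f.
case: (LF _ (is_der_mulL f HD)) => p pn Hp; exists p => //.
have Ead k g : adp D (fun g => f * D g) k g = iter k D f * D g.
  elim: k g => [//|k IH] g /=; rewrite !IH (derM HD).
  by rewrite [_ * D (D g) + _]addrC addrK.
have := Hp g0; under eq_bigr do rewrite Ead scalerAl.
rewrite -mulr_suml => E; apply/eqP; apply: contraT => nz.
by move: (domain Hl (@lexxx n) (@lex_trans n) (@lex_total n) (@lexD n) nz Hg0); rewrite E eqxx.
Qed.

Theorem lemma2p5 (K : fieldType) (n : nat) (L : comUnitAlgType K) (x : 'I_n -> L) :
  [pchar K] =i pred0 ->
  is_laurent_algebra x ->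
  forall s : Witt L -> Witt L,
    is_lie_aut s ->
    (forall D, in_cartan x D -> in_cartan x (s D)) /\
    (forall E, in_cartan x E -> exists D, in_cartan x D /\ s D = E).
Proof.
move=> ch Hl s Hs; split.
  move=> D HD; apply/(LocFin_iff ch Hl); apply: (LF_s Hs).
  exact/(LocFin_iff ch Hl).
move=> E HE; case: (Hs) => [[g sg gs] _].
exists (g E); split => //.
apply/(LocFin_iff ch Hl); apply: (LF_s_inv Hs); rewrite gs.
exact/(LocFin_iff ch Hl).
Qed.
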